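(* Assume $\mathcal{H}$ is symmetric and complete. Then for every $h\in\mathcal{H}$ and $x\in\mathcal{X}$, the conditional regret of the deferral loss is $$\Delta\mathcal{C}_{\mathsf{L}_{\mathrm{def}},\mathcal{H}}(h,x)=\max\{p_{y_{\max}},p_{n+1}\}-p_{\mathsf{h}},$$ where $p_y=p(x,y)$ for $y\in\mathcal{Y}$, $p_{n+1}=\sum_{y\in\mathcal{Y}}p(x,y)(1-c(x,y))$, $y_{\max}=\operatorname{argmax}_{y\in\mathcal{Y}}p_y$, and $p_{\mathsf{h}}=p_{\mathsf{h}(x)}$ (which equals $p_{n+1}$ when $\mathsf{h}(x)=n+1$).
   Context: Learning to defer: $\mathcal{X}$ input space, $\mathcal{Y}=[n]$, $\overline{\mathcal{Y}}=\{1,\dots,n+1\}$; hypotheses $h\colon\mathcal{X}\times\overline{\mathcal{Y}}\to\mathbb{R}$ with $\mathsf{h}(x)=\operatorname{argmax}_{y\in\overline{\mathcal{Y}}}h(x,y)$ (fixed deterministic tie-breaking); cost $c\colon\mathcal{X}\times\mathcal{Y}\to[0,1]$; deferral loss $\mathsf{L}_{\mathrm{def}}(h,x,y)=1_{\mathsf{h}(x)\neq y}1_{\mathsf{h}(x)\in[n]}+c(x,y)1_{\mathsf{h}(x)=n+1}$. A distribution on $\mathcal{X}\times\mathcal{Y}$ is fixed, with $p(x,y)=\mathbb{P}(Y=y\mid X=x)$. $\mathcal{C}_{\mathsf{L}}(h,x)=\mathbb{E}_{y\mid x}[\mathsf{L}(h,x,y)]$ and $\Delta\mathcal{C}_{\mathsf{L},\mathcal{H}}(h,x)=\mathcal{C}_{\mathsf{L}}(h,x)-\inf_{h'\in\mathcal{H}}\mathcal{C}_{\mathsf{L}}(h',x)$.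 $\mathcal{H}$ is symmetric if there is a family $\mathcal{F}$ of functions $\mathcal{X}\to\mathbb{R}$ with $\{[h(x,1),\dots,h(x,n+1)]:h\in\mathcal{H}\}=\{[f_1(x),\dots,f_{n+1}(x)]:f_i\in\mathcal{F}\}$ for all $x$; complete if $\{h(x,y):h\in\mathcal{H}\}=\mathbb{R}$ for all $(x,y)\in\mathcal{X}\times\mathcal{Y}$. *)

(* Defs.v *)
From HB Require Import structures.
From mathcomp Require Import all_boot all_order all_algebra.
From mathcomp Require Import all_classical all_reals.
Set Implicit Arguments. Unset Strict Implicit. Unset Printing Implicit Defensive.
Import Order.TTheory GRing.Theory Num.Theory.
Local Open Scope ring_scope.
Local Open Scope classical_set_scope.

(* Labels Y = 'I_n (0-based encoding of [n]); augmented labels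
   Ybar = 'I_n.+1, where the deferral label n+1 is ord_max. *)

Section Deferral.
Variables (R : realType) (X : Type) (n : nat).

Definition hyp := X -> 'I_n.+1 -> R.

Definition emb (y : 'I_n) : 'I_n.+1 := widen_ord (leqnSn n) y.

(* predicted label h(x) = argmax_y h(x,y), with a fixed deterministic
   tie-breaking rule sel (any selector of a maximiser). *)
Definition hpred (sel : ('I_n.+1 -> R) -> 'I_n.+1) (h : hyp) (x : X)
  : 'I_n.+1 := sel (h x).

Definition Ldef (sel : ('I_n.+1 -> R) -> 'I_n.+1) (c : X -> 'I_n -> R)
  (h : hyp) (x : X) (y : 'I_n) : R :=
  (if (hpred sel h x != emb y) && (hpred sel h x != ord_max) then 1 else 0)
  + c x y * (if hpred sel h x == ord_max then 1 else 0).

Definition condRisk (p : X -> 'I_n -> R) (L : hyp -> X -> 'I_n -> R)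
  (h : hyp) (x : X) : R := \sum_(y < n) p x y * L h x y.

Definition condRegret (p : X -> 'I_n -> R) (L : hyp -> X -> 'I_n -> R)
  (H : set hyp) (h : hyp) (x : X) : R :=
  condRisk p L h x - inf [set condRisk p L h' x | h' in H].

Definition symmetric_hyp (H : set hyp) : Prop :=
  exists F : set (X -> R), forall x : X,
    [set h x | h in H] =
    [set (fun y : 'I_n.+1 => f y x) | f in [set f : 'I_n.+1 -> X -> R |
                                            forall y, F (f y)]].

Definition complete_hyp (H : set hyp) : Prop :=
  forall (x : X) (y : 'I_n), [set h x (emb y) | h in H] = setT.

Definition pdef (p c : X -> 'I_n -> R) (x : X) : R :=
  \sum_(y < n) p x y * (1 - c x y).

Definition pbar (p c : X -> 'I_n -> R) (x : X) (yb : 'I_n.+1) : R :=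
  if unlift ord_max yb is Some y then p x y else pdef p c x.

End Deferral.

(* Main.v *)
Require Import Defs.
From HB Require Import structures.
From mathcomp Require Import all_boot all_order all_algebra.
From mathcomp Require Import all_classical all_reals.
Import Order.TTheory GRing.Theory Num.Theory.
Local Open Scope ring_scope.
Local Open Scope classical_set_scope.

Lemma risk_eq (R : realType) (X : Type) (n : nat)
  (sel : ('I_n.+1 -> R) -> 'I_n.+1) (p : X -> 'I_n -> R)
  (p_sum1 : forall x, \sum_(y < n) p x y = 1)
  (c : X -> 'I_n -> R) (h : hyp R X n) (x : X) :
  condRisk p (Ldef sel c) h x = 1 - pbar p c x (hpred sel h x).
Proof.
rewrite /condRisk /Ldef /pbar.
case: unliftP => [y0 ->|->].
  have E : forall y, (lift ord_max y0 != emb y) = (y != y0).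
    move=> y; congr negb; apply/eqP/eqP => [/(congr1 val)|->].
      by rewrite /= /bump leqNgt ltn_ord add0n => /val_inj.
    by apply: val_inj; rewrite /= /bump leqNgt ltn_ord.
  have neqm : (lift ord_max y0 == ord_max) = false.
    by apply/negbTE; rewrite eq_sym neq_lift.
  under eq_bigr => y _ do rewrite E neqm /= mulr0 addr0.
  rewrite -[in RHS](p_sum1 x) [in RHS](bigD1 y0) //= addrAC subrr add0r.
  rewrite (bigD1 y0) //= eqxx /= mulr0 add0r.
  by apply: eq_bigr => y ->; rewrite mulr1.
have E2 : forall y, (@ord_max n != emb y) = true.
  move=> y; apply/negP => /eqP/(congr1 val) /= E.
  by move: (ltn_ord y); rewrite -E ltnn.
rewrite /pdef.
under eq_bigr => y _ do rewrite E2 eqxx /= add0r ?mulr1.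
rewrite -[X in X - _](p_sum1 x) -sumrB; apply: eq_bigr => y _.
by rewrite mulrBr mulr1 opprB addrC subrK.
Qed.

Theorem lemma8 (R : realType) (X : Type) (n : nat)
  (sel : ('I_n.+1 -> R) -> 'I_n.+1)
  (sel_max : forall (f : 'I_n.+1 -> R) (y : 'I_n.+1), f y <= f (sel f))
  (p : X -> 'I_n -> R)
  (p_ge0 : forall x y, 0 <= p x y)
  (p_sum1 : forall x, \sum_(y < n) p x y = 1)
  (c : X -> 'I_n -> R)
  (c_ge0 : forall x y, 0 <= c x y) (c_le1 : forall x y, c x y <= 1)
  (H : set (hyp R X n))
  (Hsym : symmetric_hyp H) (Hcomp : complete_hyp H) :
  forall (h : hyp R X n) (x : X), H h ->
    condRegret p (Ldef sel c) H h x =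
    Num.max (\big[Num.max/0]_(y < n) p x y) (pdef p c x)
      - pbar p c x (hpred sel h x).
Proof.
move=> h x Hh.
set M := Num.max _ _.
have pdef_ge0 : 0 <= pdef p c x.
  by apply: sumr_ge0 => y _; apply: mulr_ge0 => //; rewrite subr_ge0.
have n_gt0 : (0 < n)%N.
  case: n p p_sum1 {M Hcomp Hsym H h Hh sel sel_max c c_ge0 c_le1 p_ge0 pdef_ge0}
    => // p p_sum1.
  by move: (p_sum1 x); rewrite big_ord0 => /eqP; rewrite eq_sym oner_eq0.
have ach : forall t : 'I_n.+1, exists h', H h' /\ hpred sel h' x = t.
  move=> t.
  have y0 : 'I_n := Ordinal n_gt0.
  case: Hsym => F HF.
  have Fall : forall r : R, exists g, F g /\ g x = r.
    move=> r.
    have : [set h x (emb y0) | h in H] r by rewrite Hcomp.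
    case=> h1 Hh1 <-.
    have : [set h x | h in H] (h1 x) by exists h1.
    rewrite HF; case=> f Ff E.
    exists (f (emb y0)); split => //.
    by rewrite -E.
  pose v : 'I_n.+1 -> R := fun y => if y == t then 1 else 0.
  have [g Hg] : exists g : 'I_n.+1 -> X -> R, forall y, F (g y) /\ g y x = v y.
    have [g Hg] := boolp.choice (fun y => Fall (v y)); by exists g.
  have : [set h x | h in H] v.
    rewrite HF; exists g; first by move=> y; case: (Hg y).
    by apply: boolp.funext => y; case: (Hg y).
  case=> h' Hh' Eh'; exists h'; split => //.
  rewrite /hpred Eh'; have := sel_max v t.
  rewrite /v eqxx; case: ifP => [/eqP //|_].
  by rewrite ler10.
have bnd : forall t, pbar p c x t <= M.
  move=> t; rewrite /pbar; case: unliftP => [y _|_]; last by rewrite le_max lexx orbT.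
  rewrite le_max; apply/orP; left.
  by rewrite (bigD1 y) //= le_max lexx.
have att : exists t, pbar p c x t = M.
  have : (\big[Num.max/0]_(y < n) p x y = 0) \/
         exists y, \big[Num.max/0]_(y < n) p x y = p x y.
    apply: (big_ind (fun v => v = 0 \/ exists y, v = p x y)); first by left.
      move=> a b Ha Hb; case: (leP a b) => _; by [].
    by move=> y _; right; exists y.
  case=> [E|[y E]].
    exists ord_max; rewrite /pbar unlift_none /M E.
    by apply/esym/max_idPr.
  case: (leP (p x y) (pdef p c x)) => Hle.
    exists ord_max; rewrite /pbar unlift_none /M E.
    by apply/esym/max_idPr.
  exists (lift ord_max y); rewrite /pbar liftK /M E.
  by apply/esym/max_idPl/ltW.
rewrite /condRegret.
have -> : inf [set condRisk p (Ldef sel c) h' x | h' in H] = 1 - M.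
  set E := [set _ | _ in _].
  have lb : lbound E (1 - M).
    move=> r [h' _ <-]; rewrite risk_eq //.
    by rewrite lerD2l lerN2.
  have inE : E (1 - M).
    case: att => t Ht; case: (ach t) => h' [Hh' Ht'].
    by exists h' => //; rewrite risk_eq // Ht' Ht.
  apply/eqP; rewrite eq_le; apply/andP; split.
    by apply: (ge_inf (ex_intro _ _ lb)).
  by apply: lb_le_inf => //; exists (1 - M).
rewrite risk_eq //.
rewrite opprB addrC addrA addrNK; done.
Qed.
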